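(* Let $X\in\mathcal{C}^\circ(\mathbb{R}^2)$ admit a GCGR with sufficient scaling factor $\eta(X)$, let $x_G\in\mathrm{int}X$ and $r>0$. Then for each integer $m\ge\eta(X)$, the family $\mathcal{P}_{\mathrm{grid}}(X,x_G,m)=\{P_{\mathrm{grid}}(X,x_I,x_G,m): x_I\in\mathrm{int}X\}$ contains only finitely many pairwise non-isomorphic planning problems.
   Context: $\mathcal{C}^\circ(\mathbb{R}^2)$ is the collection of compact, connected subsets of $\mathbb{R}^2$ with non-empty interior. For $x\in X$, $m\in\mathbb{N}$: $X_{\mathrm{grid}}(x,m):=\mathrm{int}X\cap(x+2^{-m}(\mathbb{Z}\times\mathbb{Z}))$; such a set is connected if any two of its points are joined by a chain of its points with consecutive points at distance $2^{-m}$. $X$ admits a GCGR with sufficient scaling factor $\eta(X)\in\mathbb{N}$ if for all $m\ge\eta(X)$ and all $x_I\in X$, $X_{\mathrm{grid}}(x_I,m)$ is connected. With $v\in\{(-1,0),(1,0),(0,1),(0,-1)\}$, let $U_m=\{2^{-m}v\}$. For $x_I\in\mathrm{int}X$ let $x_G(x_I,m):=B_r(x_G)\cap(x_I+2^{-m}(\mathbb{Z}\times\mathbb{Z}))$ and $P_{\mathrm{grid}}(X,x_I,x_G,m):=(X_{\mathrm{grid}}(x_I,m),U_m,f_m,x_I,x_G(x_I,m))$, where $f_m(x,u)=x+u$ if $x+u\in X_{\mathrm{grid}}(x_I,m)$ and $f_m(x,u)=x$ otherwise. Planning problems $(X,U,f,x_I,X_G)$ and $(X',U',f',x_I',X_G')$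 are isomorphic if there are bijections $\varphi:X\to X'$, $\xi:U\to U'$ with $\varphi(x_I)=x_I'$, $\varphi(X_G)=X_G'$ and $f'(\varphi(x),\xi(u))=\varphi(f(x,u))$ for all $x\in X$, $u\in U$. *)

(* Defs.v *)
From HB Require Import structures.
From mathcomp Require Import all_boot all_order all_algebra.
From mathcomp Require Import all_classical all_reals topology normedtype.
Set Implicit Arguments. Unset Strict Implicit. Unset Printing Implicit Defensive.
Import Order.TTheory GRing.Theory Num.Theory.
Import numFieldNormedType.Exports.
Local Open Scope classical_set_scope.
Local Open Scope ring_scope.

Section Defs.
Variable R : realType.
Notation pt := (R * R)%type.

Definition edist (p q : pt) : R :=
  Num.sqrt ((p.1 - q.1) ^+ 2 + (p.2 - q.2) ^+ 2).

Definition eball (c : pt) (r : R) : set pt := [set p | edist p c < r].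

Definition gstep (m : nat) : R := (2%:R ^+ m)^-1.

Definition lattice (x : pt) (m : nat) : set pt :=
  [set p | exists i j : int,
      p = (x.1 + i%:~R * gstep m, x.2 + j%:~R * gstep m)].

Definition Ccirc (X : set pt) : Prop :=
  [/\ compact X, connected X & (interior X !=set0)].

Definition Xgrid (X : set pt) (x : pt) (m : nat) : set pt :=
  interior X `&` lattice x m.

Definition grid_connected (G : set pt) (h : R) : Prop :=
  forall a b, G a -> G b ->
    exists (n : nat) (p : nat -> pt),
      [/\ p 0%N = a, p n = b,
          (forall k, (k <= n)%N -> G (p k)) &
          (forall k, (k < n)%N -> edist (p k) (p k.+1) = h)].

Definition GCGR (X : set pt) (eta : nat) : Prop :=
  forall (m : nat) (xI : pt), (eta <= m)%N -> X xI ->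
    grid_connected (Xgrid X xI m) (gstep m).

Record planning_problem := PP {
  pp_X : set pt; pp_U : set pt; pp_f : pt -> pt -> pt;
  pp_xI : pt; pp_XG : set pt }.

Definition pp_iso (P Q : planning_problem) : Prop :=
  exists (phi xi : pt -> pt),
    [/\ set_bij (pp_X P) (pp_X Q) phi,
        set_bij (pp_U P) (pp_U Q) xi,
        phi (pp_xI P) = pp_xI Q,
        phi @` (pp_XG P) = pp_XG Q &
        forall x u, pp_X P x -> pp_U P u ->
          pp_f Q (phi x) (xi u) = phi (pp_f P x u)].

Definition Um (m : nat) : set pt :=
  [set u | u = (- gstep m, 0) \/ u = (gstep m, 0) \/
           u = (0, gstep m) \/ u = (0, - gstep m)].

Definition fm (X : set pt) (xI : pt) (m : nat) (x u : pt) : pt :=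
  if `[< Xgrid X xI m (x + u) >] then x + u else x.

Definition goal_set (xG : pt) (r : R) (xI : pt) (m : nat) : set pt :=
  eball xG r `&` lattice xI m.

Definition Pgrid (X : set pt) (xI xG : pt) (r : R) (m : nat) : planning_problem :=
  PP (Xgrid X xI m) (Um m) (fm X xI m) xI (goal_set xG r xI m).

End Defs.

(* Main.v *)
Require Import Defs.
From HB Require Import structures.
From mathcomp Require Import all_boot all_order all_algebra.
From mathcomp Require Import all_classical all_reals topology normedtype.
From mathcomp Require Import ring lra zify.
Import Order.TTheory GRing.Theory Num.Theory.
Import numFieldNormedType.Exports.
Local Open Scope classical_set_scope.
Local Open Scope ring_scope.

Definition pnt {R : realType} (x : R * R) (m : nat) (i j : int) : R * R :=
  (x.1 + i%:~R * gstep R m, x.2 + j%:~R * gstep R m).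

Lemma pnt_shift {R : realType} (x y : R * R) m i j :
  pnt x m i j + (y - x) = pnt y m i j.
Proof. rewrite /pnt; congr pair => /=; ring. Qed.

Lemma pnt_step {R : realType} m (i j : int) (u : R * R) : @Um R m u ->
  exists i' j', forall z, pnt z m i j + u = pnt z m i' j'.
Proof.
case=> [->|[->|[->| ->]]].
- exists (i - 1), j => z; rewrite /pnt; congr pair => /=; rewrite ?intrB; ring.
- exists (i + 1), j => z; rewrite /pnt; congr pair => /=; rewrite ?intrD; ring.
- exists i, (j + 1) => z; rewrite /pnt; congr pair => /=; rewrite ?intrD; ring.
- exists i, (j - 1) => z; rewrite /pnt; congr pair => /=; rewrite ?intrB; ring.
Qed.

Lemma iso_of {R : realType} (X : set (R * R)) xG r m (x y : R * R) :
  (forall i j, (interior X (pnt x m i j) <-> interior X (pnt y m i j)) /\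
               (eball xG r (pnt x m i j) <-> eball xG r (pnt y m i j))) ->
  pp_iso (Pgrid X x xG r m) (Pgrid X y xG r m).
Proof.
move=> H.
exists (fun p => p + (y - x)), id; split => /=.
- split.
  + move=> p [Hp [i [j E]]]; subst p; rewrite pnt_shift; split.
      by apply/(H i j).1.
    by exists i, j.
  + by move=> p q _ _ /addIr.
  + move=> q [Hq [i [j E]]]; subst q; exists (pnt x m i j); last exact: pnt_shift.
    split; first by apply/(H i j).1.
    by exists i, j.
- by split; [move=> u | move=> u v _ _ | move=> u hu; exists u].
- by rewrite addrCA subrr addr0.
- apply/seteqP; split.
  + move=> q [p [Hb [i [j E]]] <-]; subst p; rewrite pnt_shift; split.
      by apply/(H i j).2.
    by exists i, j.
  + move=> q [Hq [i [j E]]]; subst q; exists (pnt x m i j); last exact: pnt_shift.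
    split; first by apply/(H i j).2.
    by exists i, j.
- move=> p u [Hp [i [j E]]] Hu; subst p; rewrite /fm pnt_shift.
  have [i' [j' E']] := pnt_step m i j u Hu.
  rewrite !E'.
  have -> : `[< Xgrid X y m (pnt y m i' j') >] = `[< Xgrid X x m (pnt x m i' j') >].
    apply: asbool_equiv_eq; split.
    * by move=> [h _]; split; [apply/(H i' j').1 | exists i', j'].
    * by move=> [h _]; split; [apply/(H i' j').1 | exists i', j'].
  by case: ifP; rewrite pnt_shift.
Qed.
Lemma coord_bound {R : realType} (C : R) m : exists N : nat,
  forall (a b : R) (i : int), `|b - a| <= C -> b = a + i%:~R * gstep R m ->
  (`|i| <= N%:Z).
Proof.
have C0 : 0 <= `|C| * 2%:R ^+ m by apply: mulr_ge0 => //; apply: exprn_ge0.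
exists (Num.Def.archi_bound (`|C| * 2%:R ^+ m)) => a b i hab E.
have h2 : (2%:R ^+ m : R) != 0 by rewrite expf_neq0 // pnatr_eq0.
have Ei : i%:~R = (b - a) * 2%:R ^+ m.
  by rewrite E addrC addKr /gstep mulfVK.
apply: ltW; rewrite -(ltr_int R) intr_norm Ei normrM.
apply: (le_lt_trans _ (archi_boundP C0)).
rewrite [`|2%:R ^+ m|]ger0_norm; last exact: exprn_ge0.
apply: ler_wpM2r; first exact: exprn_ge0.
exact: (le_trans hab (ler_norm C)).
Qed.

Lemma ball_bound {R : realType} (xG p : R * R) r : eball xG r p ->
  `|p.1 - xG.1| <= r /\ `|p.2 - xG.2| <= r.
Proof.
rewrite /eball /edist /= => h; split; apply: ltW; apply: le_lt_trans h;
  rewrite -sqrtr_sqr; apply: ler_wsqrtr.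
- by rewrite lerDl sqr_ge0.
- by rewrite lerDr sqr_ge0.
Qed.

Lemma set_bound {R : realType} (X : set (R * R)) xG r :
  compact X -> X xG -> 0 < r -> exists M : R,
  forall p, X p \/ eball xG r p -> `|p.1| <= M /\ `|p.2| <= M.
Proof.
move=> cX Xg r0.
have /pinfty_ex_gt0 [M M0 HM] := compact_bounded cX.
have B1 : forall p, X p -> `|p.1| <= M /\ `|p.2| <= M.
  by move=> p /HM /=; rewrite prod_normE ge_max => /andP.
exists (M + r) => p [/B1 [h1 h2] | /ball_bound [h1 h2]]; first by split; lra.
have [g1 g2] := B1 _ Xg.
have e1 : `|p.1| <= `|p.1 - xG.1| + `|xG.1|.
  by rewrite -{1}(subrK xG.1 p.1) ler_normD.
have e2 : `|p.2| <= `|p.2 - xG.2| + `|xG.2|.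
  by rewrite -{1}(subrK xG.2 p.2) ler_normD.
split; lra.
Qed.

Theorem proposition2 (R : realType) (X : set (R * R)) (eta : nat)
  (xG : R * R) (r : R) :
  Ccirc X -> GCGR X eta -> interior X xG -> 0 < r ->
  forall m : nat, (eta <= m)%N ->
    exists s : seq (R * R),
      (forall y, y \in s -> interior X y) /\
      (forall xI, interior X xI ->
         exists2 y, y \in s & pp_iso (Pgrid X xI xG r m) (Pgrid X y xG r m)).
Proof.
move=> [cX _ _] _ Xg r0 m _.
have [M HM] := set_bound X xG r cX (interior_subset Xg) r0.
have [N HN] := coord_bound (M + M) m.
have Bd : forall x i j, X x ->
    (X° (pnt x m i j) \/ eball xG r (pnt x m i j)) ->
    `|i| <= N%:Z /\ `|j| <= N%:Z.
  move=> x i j Xx hq.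
  have [a1 a2] := HM _ (or_introl Xx).
  have [b1 b2] : `|(pnt x m i j).1| <= M /\ `|(pnt x m i j).2| <= M.
    by apply: HM; case: hq => h; [left; apply: interior_subset | right].
  split.
  - apply: (HN x.1 (pnt x m i j).1 i) => //.
    by apply: (le_trans (ler_normB _ _)); lra.
  - apply: (HN x.2 (pnt x m i j).2 j) => //.
    by apply: (le_trans (ler_normB _ _)); lra.
pose K := (2 * N).+1.
pose o (k : 'I_K) : int := (k : nat)%:Z - N%:Z.
pose sig (x : R * R) : {ffun 'I_K * 'I_K -> bool * bool} :=
  [ffun k => (`[< X° (pnt x m (o k.1) (o k.2)) >],
              `[< eball xG r (pnt x m (o k.1) (o k.2)) >])].
have Hsig : forall x y, X x -> X y -> sig x = sig y -> forall i j,
    (X° (pnt x m i j) <-> X° (pnt y m i j)) /\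
    (eball xG r (pnt x m i j) <-> eball xG r (pnt y m i j)).
  move=> x y Xx Xy E i j.
  case: (boolP ((`|i| <= N%:Z) && (`|j| <= N%:Z))) => [/andP [hi hj] | hn].
  - have ki : (absz (i + N%:Z)%R < K)%N by rewrite /K; lia.
    have kj : (absz (j + N%:Z)%R < K)%N by rewrite /K; lia.
    have oi : o (Ordinal ki) = i by rewrite /o /=; lia.
    have oj : o (Ordinal kj) = j by rewrite /o /=; lia.
    have := congr1 (fun f : {ffun 'I_K * 'I_K -> bool * bool} => f (Ordinal ki, Ordinal kj)) E.
    rewrite !ffunE /= oi oj => -[e1 e2].
    by split; apply: asbool_eq_equiv.
  - have nx : forall z, X z ->
        ~ (X° (pnt z m i j) \/ eball xG r (pnt z m i j)).
      by move=> z Xz /(Bd z i j Xz) [h1 h2]; rewrite h1 h2 in hn.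
    split; split => h; exfalso;
      [apply: (nx x) | apply: (nx y) | apply: (nx x) | apply: (nx y)]; by auto.
pose P (sg : {ffun 'I_K * 'I_K -> bool * bool}) : set (R * R) :=
  [set z | X° z /\ sig z = sg].
exists [seq xget xG (P sg) | sg <- enum {ffun 'I_K * 'I_K -> bool * bool}].
split.
- move=> y /mapP [sg _ ->].
  case: (pselect (exists z, P sg z)) => [ex | nex].
    by have [] := xgetPex xG ex.
  by rewrite xgetPN //; move=> z Pz; apply: nex; exists z.
- move=> xI hI.
  have ex : exists z, P (sig xI) z by exists xI.
  have [hy ey] := xgetPex xG ex.
  exists (xget xG (P (sig xI))).
    by apply/mapP; exists (sig xI); rewrite ?mem_enum.
  apply: iso_of; apply: Hsig => //; try exact: interior_subset.
Qed.
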